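(* Let $(\mathscr C,A,\psi)$ be an entwining structure over a field $K$. Then $(F_\psi,G_\psi)$ is a pair of adjoint functors, i.e., there are isomorphisms $Com^{\mathscr C}_A(\psi)(\mathcal M\otimes A,\mathcal N)\cong Com^{\mathscr C}(\mathcal M,\mathcal N)$ natural in $\mathcal M\in Com^{\mathscr C}$ and $\mathcal N\in Com^{\mathscr C}_A(\psi)$.
   Context: A $K$-coalgebra with several objects $\mathscr C$: a set $Ob(\mathscr C)$, vector spaces $\mathscr C(X,Y)$, linear comultiplications $\delta_{XYZ}:\mathscr C(X,Z)\to\mathscr C(Y,Z)\otimes\mathscr C(X,Y)$, $\delta_{XYZ}(f)=f_{Y1}\otimes f_{Y2}$, and counits $\epsilon_X:\mathscr C(X,X)\to K$, coassociative and counital in the sense $(\delta_{YWZ}\otimes\mathrm{id})\circ\delta_{XYZ}=(\mathrm{id}\otimes\delta_{XYW})\circ\delta_{XWZ}$, $(\epsilon_Y\otimes\mathrm{id})\circ\delta_{XYY}=\mathrm{id}=(\mathrm{id}\otimes\epsilon_X)\circ\delta_{XXY}$. For a $K$-algebra $A$ (multiplication $\mu_A$), an entwining structure $(\mathscr C,A,\psi)$ is a family of linear maps $\psi_{XY}:\mathscr C(X,Y)\otimes A\to A\otimes\mathscr C(X,Y)$, $\psi_{XY}(f\otimes a)=a_\psi\otimes f^\psi$, with (i) $(\mathrm{id}_A\otimes\delta_{XYZ})\circ\psi_{XZ}=(\psi_{YZ}\otimes\mathrm{id})\circ(\mathrm{id}\otimes\psi_{XY})\circ(\delta_{XYZ}\otimes\mathrm{id}_A)$;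 (ii) $\psi_{XZ}\circ(\mathrm{id}\otimes\mu_A)=(\mu_A\otimes\mathrm{id})\circ(\mathrm{id}_A\otimes\psi_{XZ})\circ(\psi_{XZ}\otimes\mathrm{id}_A)$; (iii) $\psi_{XZ}(f\otimes1)=1\otimes f$; (iv) $\epsilon_Z(g^\psi)a_\psi=\epsilon_Z(g)a$ for $g\in\mathscr C(Z,Z)$. $Com^{\mathscr C}$ is the category of right $\mathscr C$-comodules: families $\mathcal M(X)$ with coactions $\rho_{XY}:\mathcal M(X)\to\mathcal M(Y)\otimes\mathscr C(X,Y)$, $m\mapsto m_{Y0}\otimes m_{Y1}$, with $(\rho_{ZY}\otimes\mathrm{id})\rho_{XZ}=(\mathrm{id}\otimes\delta_{XZY})\rho_{XY}$, $(\mathrm{id}\otimes\epsilon_X)\rho_{XX}=\mathrm{id}$, and morphisms the families of linear maps commuting with coactions. $Com^{\mathscr C}_A(\psi)$ is the category of entwined comodules: comodules with right $A$-module structures on each $\mathcal M(X)$ such that $\rho_{XY}(ma)=m_{Y0}a_\psi\otimes(m_{Y1})^\psi$, with morphisms the comodule morphisms having $A$-linear components. $F_\psi:Com^{\mathscr C}\to Com^{\mathscr C}_A(\psi)$ sends $\mathcal M$ to $\mathcal M\otimes A$ with $(\mathcal M\otimes A)(X)=\mathcal M(X)\otimes A$, right action $(m\otimes a)b=m\otimes ab$ and coaction $m\otimes a\mapsto m_{Y0}\otimes a_\psi\otimes(m_{Y1})^\psi$, and a morphism $\phi$ to $\phi\otimes\mathrm{id}_A$. $G_\psi:Com^{\mathscr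 C}_A(\psi)\to Com^{\mathscr C}$ is the forgetful functor. *)

(* Defs.v *)
From HB Require Import structures.
From mathcomp Require Import all_boot all_order all_algebra generic_quotient.
From mathcomp Require Import boolp.
Set Implicit Arguments. Unset Strict Implicit. Unset Printing Implicit Defensive.
Import GRing.Theory.
Local Open Scope ring_scope.
Local Open Scope quotient_scope.

Section Tensor.
Variable K : fieldType.

Definition bilinear_map (V W U : lmodType K) (b : V -> W -> U) : Prop :=
  (forall w, linear (b^~ w)) /\ (forall v, linear (b v)).

Definition tsum (V W U : lmodType K) (b : V -> W -> U) (s : seq (V * W)) : U :=
  \sum_(p <- s) b p.1 p.2.

Definition tens_rel (V W : lmodType K) (s t : seq (V * W)) : Prop :=
  forall (U : lmodType K) (b : V -> W -> U), bilinear_map b -> tsum b s = tsum b t.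

Variables V W : lmodType K.

Definition tens_relb : rel (seq (V * W)) := fun s t => `[< tens_rel s t >].

Lemma tens_relb_equiv : equiv_class_of tens_relb.
Proof.
split.
- by move=> s; apply/asboolP.
- by move=> s t; apply/asboolP/asboolP => H U b hb; rewrite H.
- by move=> t s u /asboolP H1 /asboolP H2; apply/asboolP => U b hb; rewrite H1 ?H2.
Qed.

Canonical tens_equiv := EquivRelPack tens_relb_equiv.

Definition tensor := {eq_quot tens_equiv}.
Local Notation T := (tensor).
HB.instance Definition _ := Choice.copy T {eq_quot tens_equiv}.
Definition tpi (s : seq (V * W)) : T := \pi_T s.

Lemma lin0 (X Y : lmodType K) (f : X -> Y) : linear f -> f 0 = 0.
Proof. move=> lf; have := lf 1 0 0; rewrite !scale1r addr0 => H.
by have := etrans (addr0 _) H => /addrI. Qed.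
Lemma linD (X Y : lmodType K) (f : X -> Y) : linear f -> forall u v, f (u + v) = f u + f v.
Proof. by move=> lf u v; have := lf 1 u v; rewrite !scale1r. Qed.
Lemma linZ (X Y : lmodType K) (f : X -> Y) : linear f -> forall k u, f (k *: u) = k *: f u.
Proof. by move=> lf k u; have := lf k u 0; rewrite !addr0 lin0 // addr0. Qed.
Lemma linN (X Y : lmodType K) (f : X -> Y) : linear f -> forall u, f (- u) = - f u.
Proof. by move=> lf u; rewrite -scaleN1r linZ // scaleN1r. Qed.

Lemma tsum_repr (U : lmodType K) (b : V -> W -> U) s :
  bilinear_map b -> tsum b (repr (tpi s)) = tsum b s.
Proof.
move=> hb; have /eqmodP /asboolP H : repr (tpi s) = s %[mod T] by rewrite reprK.
exact: H.
Qed.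

Lemma tensor_ext (x y : T) :
  (forall (U : lmodType K) (b : V -> W -> U), bilinear_map b -> tsum b (repr x) = tsum b (repr y)) -> x = y.
Proof. by move=> H; rewrite -[x]reprK -[y]reprK; apply/eqmodP/asboolP. Qed.

Lemma tsum_cat (U : lmodType K) (b : V -> W -> U) s t : tsum b (s ++ t) = tsum b s + tsum b t.
Proof. exact: big_cat. Qed.

Lemma tsum_scale (U : lmodType K) (b : V -> W -> U) k s : bilinear_map b ->
  tsum b (map (fun p => (k *: p.1, p.2)) s) = k *: tsum b s.
Proof.
move=> [hb _]; rewrite /tsum big_map scaler_sumr; apply: eq_bigr => p _ /=.
exact: (linZ (hb p.2)).
Qed.

Definition tadd (x y : T) : T := tpi (repr x ++ repr y).
Definition tscale (k : K) (x : T) : T := tpi (map (fun p => (k *: p.1, p.2)) (repr x)).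
Definition topp (x : T) : T := tscale (-1) x.
Definition tzero : T := tpi [::].

Lemma taddA : associative tadd.
Proof. by move=> x y z; apply: tensor_ext => U b hb; rewrite !tsum_repr // !tsum_cat !tsum_repr // !tsum_cat addrA. Qed.
Lemma taddC : commutative tadd.
Proof. by move=> x y; apply: tensor_ext => U b hb; rewrite !tsum_repr // !tsum_cat addrC. Qed.
Lemma tadd0 : left_id tzero tadd.
Proof. by move=> x; apply: tensor_ext => U b hb; rewrite !tsum_repr // !tsum_cat tsum_repr // /tsum big_nil add0r. Qed.
Lemma taddN : left_inverse tzero topp tadd.
Proof.
move=> x; apply: tensor_ext => U b hb; rewrite !tsum_repr // !tsum_cat tsum_repr //.
by rewrite tsum_scale // scaleN1r addNr /tsum big_nil.
Qed.

HB.instance Definition _ := GRing.isZmodule.Build T taddA taddC tadd0 taddN.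

Lemma tscaleA a b' (x : T) : tscale a (tscale b' x) = tscale (a * b') x.
Proof. by apply: tensor_ext => U b hb; rewrite !tsum_repr // !tsum_scale // ?tsum_repr // tsum_scale // scalerA. Qed.
Lemma tscale1 : left_id 1 tscale.
Proof. by move=> x; apply: tensor_ext => U b hb; rewrite tsum_repr // tsum_scale // scale1r. Qed.
Lemma tscaleDr : right_distributive tscale (@GRing.add T).
Proof.
move=> a x y; apply: tensor_ext => U b hb.
rewrite /GRing.add /= /tadd !tsum_repr // tsum_scale // tsum_repr // !tsum_cat !tsum_repr //.
by rewrite !tsum_scale // scalerDr.
Qed.
Lemma tscaleDl (x : T) : {morph tscale^~ x : a b' / a + b'}.
Proof.
move=> a c; apply: tensor_ext => U b hb.
rewrite /GRing.add /= /tadd !tsum_repr // tsum_scale // !tsum_cat !tsum_repr //.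
by rewrite !tsum_scale // scalerDl.
Qed.

HB.instance Definition _ := GRing.Zmodule_isLmodule.Build K T tscaleA tscale1 tscaleDr tscaleDl.
End Tensor.

Section TensorOps.
Variable K : fieldType.

Definition tpure (V W : lmodType K) (v : V) (w : W) : tensor V W := tpi [:: (v, w)].

Definition tlift (V W U : lmodType K) (b : V -> W -> U) (x : tensor V W) : U :=
  tsum b (repr x).

Definition tmap (V W V' W' : lmodType K) (f : V -> V') (g : W -> W') :
  tensor V W -> tensor V' W' := tlift (fun v w => tpure (f v) (g w)).

Definition tassoc (U V W : lmodType K) : tensor (tensor U V) W -> tensor U (tensor V W) :=
  tlift (fun x w => tlift (fun u v => tpure u (tpure v w)) x).

Definition tassoc_inv (U V W : lmodType K) : tensor U (tensor V W) -> tensor (tensor U V) W :=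
  tlift (fun u y => tlift (fun v w => tpure (tpure u v) w) y).

Definition tlunit (V : lmodType K) : tensor K^o V -> V := tlift (fun (k : K^o) (v : V) => k *: v).
Definition trunit (V : lmodType K) : tensor V K^o -> V := tlift (fun (v : V) (k : K^o) => k *: v).
End TensorOps.

Section Entwining.
Local Unset Implicit Arguments.
Variables (K : fieldType) (Ob : Type).

Definition is_coalgebra (C : Ob -> Ob -> lmodType K)
    (delta : forall X Y Z, C X Z -> tensor (C Y Z) (C X Y))
    (eps : forall X, C X X -> K^o) : Prop :=
  [/\ (forall X Y Z, linear (delta X Y Z)),
      (forall X, linear (eps X)),
      (forall X Y W Z (f : C X Z),
          tassoc (tmap (delta Y W Z) id (delta X Y Z f))
          = tmap id (delta X Y W) (delta X W Z f)),
      (forall X Y (f : C X Y), tlunit (tmap (eps Y) id (delta X Y Y f)) = f) &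
      (forall X Y (f : C X Y), trunit (tmap id (eps X) (delta X X Y f)) = f)].

Definition alg_mul (A : algType K) : tensor A A -> A := tlift (fun a b : A => a * b).

Definition is_entwining (C : Ob -> Ob -> lmodType K)
    (delta : forall X Y Z, C X Z -> tensor (C Y Z) (C X Y))
    (eps : forall X, C X X -> K^o) (A : algType K)
    (psi : forall X Y, tensor (C X Y) A -> tensor A (C X Y)) : Prop :=
  [/\ (forall X Y, linear (psi X Y)),
      (forall X Y Z (t : tensor (C X Z) A),
          tmap id (delta X Y Z) (psi X Z t)
          = tassoc (tmap (psi Y Z) id
              (tassoc_inv (tmap id (psi X Y) (tassoc (tmap (delta X Y Z) id t)))))),
      (forall X Z (t : tensor (C X Z) (tensor A A)),
          psi X Z (tmap id (@alg_mul A) t)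
          = tmap (@alg_mul A) id
              (tassoc_inv (tmap id (psi X Z) (tassoc (tmap (psi X Z) id (tassoc_inv t)))))),
      (forall X Z (f : C X Z), psi X Z (tpure f 1) = tpure 1 f) &
      (forall Z (g : C Z Z) (a : A), trunit (tmap id (eps Z) (psi Z Z (tpure g a))) = eps Z g *: a)].

Variable C : Ob -> Ob -> lmodType K.
Variable delta : forall X Y Z, C X Z -> tensor (C Y Z) (C X Y).
Variable eps : forall X, C X X -> K^o.

Record comodule := Comodule {
  cm_obj : Ob -> lmodType K;
  cm_coact : forall X Y, cm_obj X -> tensor (cm_obj Y) (C X Y) }.

Definition is_comodule (M : comodule) : Prop :=
  [/\ (forall X Y, linear (cm_coact M X Y)),
      (forall X Z Y (m : cm_obj M X),
          tassoc (tmap (cm_coact M Z Y) id (cm_coact M X Z m))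
          = tmap id (@delta X Z Y) (cm_coact M X Y m)) &
      (forall X (m : cm_obj M X), trunit (tmap id (@eps X) (cm_coact M X X m)) = m)].

Definition is_comod_mor (M N : comodule) (f : forall X, cm_obj M X -> cm_obj N X) : Prop :=
  (forall X, linear (f X)) /\
  (forall X Y (m : cm_obj M X), cm_coact N X Y (f X m) = tmap (f Y) id (cm_coact M X Y m)).

Variable A : algType K.
Variable psi : forall X Y, tensor (C X Y) A -> tensor A (C X Y).

Record entwined := Entwined {
  em_obj : Ob -> lmodType K;
  em_coact : forall X Y, em_obj X -> tensor (em_obj Y) (C X Y);
  em_act : forall X, em_obj X -> A -> em_obj X }.

Definition Gobj (N : entwined) : comodule := Comodule (em_obj N) (em_coact N).

Definition is_right_module (V : lmodType K) (act : V -> A -> V) : Prop :=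
  [/\ (forall a, linear (act^~ a)), (forall m, linear (act m)),
      (forall m, act m 1 = m) & (forall m a b, act (act m a) b = act m (a * b))].

Definition is_entwined (N : entwined) : Prop :=
  [/\ is_comodule (Gobj N),
      (forall X, is_right_module (em_obj N X) (em_act N X)) &
      (forall X Y (m : em_obj N X) (a : A),
          em_coact N X Y (em_act N X m a)
          = tmap (tlift (em_act N Y)) id
              (tassoc_inv (tmap id (@psi X Y) (tassoc (tmap (em_coact N X Y) id (tpure m a))))))].

Definition is_entw_mor (M N : entwined) (f : forall X, em_obj M X -> em_obj N X) : Prop :=
  is_comod_mor (Gobj M) (Gobj N) f /\
  (forall X (m : em_obj M X) (a : A), f X (em_act M X m a) = em_act N X (f X m) a).

Definition Fobj (M : comodule) : entwined :=
  Entwined (fun X => tensor (cm_obj M X) A)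
    (fun X Y x => tassoc_inv (tmap id (@psi X Y) (tassoc (tmap (cm_coact M X Y) id x))))
    (fun X x b => tmap id (fun a : A => a * b) x).

Definition Fmor (M N : comodule) (f : forall X, cm_obj M X -> cm_obj N X) :
    forall X, em_obj (Fobj M) X -> em_obj (Fobj N) X :=
  fun X => tmap (f X) id.
End Entwining.

Arguments is_coalgebra {K Ob} C delta eps.
Arguments is_entwining {K Ob} C delta eps A psi.
Arguments cm_obj {K Ob C} c _.
Arguments cm_coact {K Ob C} c X Y _.
Arguments em_obj {K Ob C A} e _.
Arguments em_coact {K Ob C A} e X Y _.
Arguments em_act {K Ob C A} e X _ _.
Arguments is_comodule {K Ob C} delta eps M.
Arguments is_comod_mor {K Ob C} M N f.
Arguments Gobj {K Ob C A} N.
Arguments is_entwined {K Ob C} delta eps {A} psi N.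
Arguments is_entw_mor {K Ob C A} M N f.
Arguments Fobj {K Ob C A} psi M.
Arguments Fmor {K Ob C A} psi {M N} f X _.

(* Main.v *)
Require Import Defs.
From HB Require Import structures.
From mathcomp Require Import all_boot all_order all_algebra generic_quotient.
From mathcomp Require Import boolp.
Set Implicit Arguments. Unset Strict Implicit. Unset Printing Implicit Defensive.
Import GRing.Theory.
Local Open Scope ring_scope.
Local Open Scope quotient_scope.

Section Toolkit.
Variable K : fieldType.
Implicit Types V W U P : lmodType K.

Lemma tlift_pi V W U (b : V -> W -> U) s : bilinear_map b -> tlift b (tpi s) = tsum b s.
Proof. exact: tsum_repr. Qed.

Lemma tlift_add V W U (b : V -> W -> U) (x y : tensor V W) : bilinear_map b ->
  tlift b (x + y) = tlift b x + tlift b y.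
Proof.
move=> hb; rewrite /tlift; change (x + y) with (tadd x y); rewrite /tadd tsum_repr //.
exact: tsum_cat.
Qed.

Lemma tlift_scale V W U (b : V -> W -> U) k (x : tensor V W) : bilinear_map b ->
  tlift b (k *: x) = k *: tlift b x.
Proof.
move=> hb; rewrite /tlift; change (k *: x) with (tscale k x); rewrite /tscale tsum_repr //.
exact: tsum_scale.
Qed.

Lemma tlift_zero V W U (b : V -> W -> U) : bilinear_map b -> tlift b (0 : tensor V W) = 0.
Proof.
move=> hb; rewrite /tlift (_ : (0 : tensor V W) = tzero V W) //.
by rewrite /tzero tsum_repr // /tsum big_nil.
Qed.

Lemma lin_tlift V W U (b : V -> W -> U) : bilinear_map b -> linear (tlift b).
Proof. by move=> hb k x y; rewrite tlift_add // tlift_scale. Qed.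

Lemma tlift_pure V W U (b : V -> W -> U) v w : bilinear_map b -> tlift b (tpure v w) = b v w.
Proof. by move=> hb; rewrite /tpure tlift_pi // /tsum big_seq1. Qed.

Lemma tlift_ext V W U (b b' : V -> W -> U) x : (forall v w, b v w = b' v w) ->
  tlift b x = tlift b' x.
Proof. by move=> H; rewrite /tlift /tsum; apply: eq_bigr => p _; rewrite H. Qed.

Lemma tlift_linb V W U (b b1 b2 : V -> W -> U) k x :
  (forall v w, b v w = k *: b1 v w + b2 v w) ->
  tlift b x = k *: tlift b1 x + tlift b2 x.
Proof.
move=> H; rewrite /tlift /tsum scaler_sumr -big_split /=.
by apply: eq_bigr => p _; rewrite H.
Qed.

Lemma lin_tlift_param P V W U (b : P -> V -> W -> U) x :
  (forall v w, linear (fun p => b p v w)) -> linear (fun p => tlift (b p) x).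
Proof. by move=> H k p q; apply: tlift_linb => v w; rewrite H. Qed.

Lemma bil_eta V W U (b : V -> W -> U) : bilinear_map b ->
  bilinear_map (fun v w => b v w).
Proof. by []. Qed.

Lemma tensor_sum V W (x : tensor V W) : x = \sum_(p <- repr x) tpure p.1 p.2.
Proof.
apply: tensor_ext => U b hb.
have -> : tsum b (repr (\sum_(p <- repr x) tpure p.1 p.2)) = tlift b (\sum_(p <- repr x) tpure p.1 p.2) by [].
rewrite (big_morph (tlift b) (fun x y => tlift_add x y hb) (tlift_zero hb)).
by rewrite /tsum; apply: eq_bigr => p _; rewrite tlift_pure.
Qed.

Lemma lin_sum V U (f : V -> U) (s : seq V) : linear f ->
   f (\sum_(v <- s) v) = \sum_(v <- s) f v.
Proof. by move=> lf; apply: big_morph; [exact: linD | exact: lin0]. Qed.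

Lemma tens_ind V W U (F G : tensor V W -> U) : linear F -> linear G ->
  (forall v w, F (tpure v w) = G (tpure v w)) -> forall x, F x = G x.
Proof.
move=> lF lG H x; rewrite (tensor_sum x).
rewrite (big_morph F (linD lF) (lin0 lF)) (big_morph G (linD lG) (lin0 lG)).
by apply: eq_bigr => p _; rewrite H.
Qed.

Lemma tpure_bil V W : bilinear_map (@tpure K V W).
Proof.
split=> [w|v] k x y; apply: tensor_ext => U b hb;
  change (tsum b (repr ?z)) with (tlift b z);
  by rewrite tlift_add // tlift_scale // !tlift_pure //; case: hb => h1 h2; rewrite ?h1 ?h2.
Qed.


Lemma lin_id V : linear (fun x : V => x).
Proof. by []. Qed.

Lemma lin_comp V W U (f : W -> U) (g : V -> W) : linear f -> linear g ->
  linear (fun x => f (g x)).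
Proof. by move=> lf lg k x y; rewrite lg lf. Qed.

Lemma lin_tpure_l V W (w : W) : linear (fun v : V => tpure v w).
Proof. by case: (tpure_bil V W) => h _; exact: h. Qed.

Lemma lin_tpure_r V W (v : V) : linear (fun w : W => tpure v w).
Proof. by case: (tpure_bil V W) => _ h; exact: h. Qed.

Lemma lin_tpure_lc P V W (f : P -> V) (w : W) : linear f -> linear (fun p => tpure (f p) w).
Proof. by move=> lf k x y; rewrite lf lin_tpure_l. Qed.

Lemma lin_tpure_rc P V W (v : V) (g : P -> W) : linear g -> linear (fun p => tpure v (g p)).
Proof. by move=> lg k x y; rewrite lg lin_tpure_r. Qed.

Lemma bil_tmap V W V' W' (f : V -> V') (g : W -> W') : linear f -> linear g ->
  bilinear_map (fun v w => tpure (f v) (g w)).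
Proof.
move=> lf lg; split=> [w|v].
- exact: lin_tpure_lc.
- exact: lin_tpure_rc.
Qed.

Lemma lin_tmap V W V' W' (f : V -> V') (g : W -> W') : linear f -> linear g ->
  linear (tmap f g).
Proof. by move=> lf lg; apply: lin_tlift; apply: bil_tmap. Qed.

Lemma tmap_pure V W V' W' (f : V -> V') (g : W -> W') v w : linear f -> linear g ->
  tmap f g (tpure v w) = tpure (f v) (g w).
Proof. by move=> lf lg; rewrite /tmap tlift_pure //; apply: bil_tmap. Qed.

Lemma lin_tmap_l P V W V' W' (F : P -> V -> V') (g : W -> W') x :
  (forall v, linear (fun p => F p v)) -> linear (fun p => tmap (F p) g x).
Proof.
move=> H; apply: lin_tlift_param => v w k p q.
by rewrite H; case: (tpure_bil V' W') => h _; rewrite h.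
Qed.

Lemma lin_tmap_r P V W V' W' (f : V -> V') (G : P -> W -> W') x :
  (forall w, linear (fun p => G p w)) -> linear (fun p => tmap f (G p) x).
Proof.
move=> H; apply: lin_tlift_param => v w k p q.
by rewrite H; case: (tpure_bil V' W') => _ h; rewrite h.
Qed.

Lemma bil_assoc U V W : bilinear_map
  (fun (x : tensor U V) (w : W) => tlift (fun u v => tpure u (tpure v w)) x).
Proof.
split=> [w|x].
- apply: lin_tlift; split=> [v|u].
  + exact: lin_tpure_l.
  + cbv beta; apply: lin_tpure_rc; exact: lin_tpure_l.
- apply: lin_tlift_param => u v k p q.
  by rewrite (lin_tpure_r v) (lin_tpure_r u).
Qed.

Lemma lin_tassoc U V W : linear (@tassoc K U V W).
Proof. exact: (lin_tlift (bil_assoc U V W)). Qed.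

Lemma tassoc_pure U V W (u : U) (v : V) (w : W) :
  tassoc (tpure (tpure u v) w) = tpure u (tpure v w).
Proof.
rewrite /tassoc tlift_pure; last exact: bil_assoc.
rewrite tlift_pure //; split=> [v'|u'].
- exact: lin_tpure_l.
- cbv beta; apply: lin_tpure_rc; exact: lin_tpure_l.
Qed.

Lemma bil_assoc_inv U V W : bilinear_map
  (fun (u : U) (y : tensor V W) => tlift (fun v w => tpure (tpure u v) w) y).
Proof.
split=> [y|u].
- apply: lin_tlift_param => v w k p q.
  by rewrite (lin_tpure_l v) (lin_tpure_l w).
- apply: lin_tlift; split=> [w|v].
  + cbv beta; apply: lin_tpure_lc; exact: lin_tpure_r.
  + exact: lin_tpure_r.
Qed.

Lemma lin_tassoc_inv U V W : linear (@tassoc_inv K U V W).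
Proof. exact: (lin_tlift (bil_assoc_inv U V W)). Qed.

Lemma tassoc_inv_pure U V W (u : U) (v : V) (w : W) :
  tassoc_inv (tpure u (tpure v w)) = tpure (tpure u v) w.
Proof.
rewrite /tassoc_inv tlift_pure; last exact: bil_assoc_inv.
rewrite tlift_pure //; split=> [w'|v'].
- cbv beta; apply: lin_tpure_lc; exact: lin_tpure_r.
- exact: lin_tpure_r.
Qed.

Lemma bil_runit V : bilinear_map (fun (v : V) (k : K^o) => k *: v).
Proof.
split=> [k|v] a x y /=.
- by rewrite scalerDr !scalerA mulrC.
- by rewrite scalerDl -scalerA.
Qed.

Lemma lin_trunit V : linear (@trunit K V).
Proof. exact: (lin_tlift (bil_runit V)). Qed.

Lemma trunit_pure V (v : V) (k : K^o) : trunit (tpure v k) = k *: v.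
Proof. by rewrite /trunit tlift_pure //; exact: bil_runit. Qed.

Lemma bil_mul (A : algType K) : bilinear_map (fun a b : A => a * b).
Proof.
split=> [b|a] k x y /=.
- by rewrite mulrDl scalerAl.
- by rewrite mulrDr scalerAr.
Qed.

Lemma lin_alg_mul (A : algType K) : linear (@alg_mul K A).
Proof. exact: (lin_tlift (bil_mul A)). Qed.

Lemma alg_mul_pure (A : algType K) (a b : A) : @alg_mul K A (tpure a b) = a * b.
Proof. by rewrite /alg_mul tlift_pure //; exact: bil_mul. Qed.

Lemma lin_mulr (A : algType K) (b : A) : linear (fun a : A => a * b).
Proof. by case: (bil_mul A) => h _; exact: h. Qed.

Lemma lin_mull (A : algType K) (a : A) : linear (fun b : A => a * b).
Proof. by case: (bil_mul A) => _ h; exact: h. Qed.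

Lemma lin_mulr_param (A : algType K) : forall a : A, linear (fun b : A => a * b).
Proof. exact: lin_mull. Qed.

Lemma tpureZr V W (v : V) (w : W) k : tpure v (k *: w) = k *: tpure v w.
Proof. by have := lin_tpure_r v k w 0; rewrite !addr0 (lin0 (lin_tpure_r v)) addr0. Qed.

Lemma tpureZl V W (v : V) (w : W) k : tpure (k *: v) w = k *: tpure v w.
Proof. by have := lin_tpure_l w k v 0; rewrite !addr0 (lin0 (lin_tpure_l w)) addr0. Qed.

Lemma bil_intro V W U (b : V -> W -> U) :
  (forall w, linear (fun v => b v w)) -> (forall v, linear (fun w => b v w)) -> bilinear_map b.
Proof. by move=> h1 h2; split. Qed.

End Toolkit.

Ltac lin_comp_step :=
  match goal with |- ?L (fun y => ?F (@?G y)) =>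
    tryif (match G with (fun z => z) => idtac end) then fail
    else apply: (@lin_comp _ _ _ _ F G) end.

Ltac lin := repeat first [ progress cbv beta | match goal with |- forall _, _ => intro end | apply: lin_id | apply: lin_tassoc | apply: lin_tassoc_inv
  | apply: lin_trunit | apply: lin_alg_mul | apply: lin_tpure_lc | apply: lin_tpure_rc
  | apply: lin_mulr | apply: lin_mull
  | apply: tpure_bil | apply: bil_tmap | apply: bil_mul | apply: bil_runit
  | apply: lin_tmap | apply: lin_tlift
  | match goal with H : _ |- _ => apply: H end
  | apply: bil_intro | apply: lin_tmap_l | apply: lin_tmap_r | apply: lin_tlift_param
  | lin_comp_step ].

Ltac psimp := repeat (first [rewrite tmap_pure | rewrite tassoc_pure | rewrite tassoc_inv_pure
   | rewrite trunit_pure | rewrite alg_mul_pure | rewrite tlift_pure]; try solve [lin]).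

Ltac gen t := move: t; apply: tens_ind; [solve [lin] | solve [lin] | ].
Ltac genf := apply: tens_ind; [solve [lin] | solve [lin] | ].

Section RM.
Variable K : fieldType.
Variable A : algType K.
Variable V : lmodType K.
Variable act : V -> A -> V.
Hypothesis H : is_right_module K A V act.

Lemma rm_linl a (P : lmodType K) (h : P -> V) : linear h -> linear (fun p => act (h p) a).
Proof.
move=> hL k x y; case: H => H1 _ _ _.
by have := H1 a k (h x) (h y); cbv beta => <-; rewrite hL.
Qed.
Lemma rm_linr m : linear (act m).
Proof. by case: H. Qed.
Lemma rm_bil : bilinear_map act.
Proof. by case: H => H1 H2 _ _; split. Qed.
Lemma rm_1 m : act m 1 = m.
Proof. by case: H. Qed.
Lemma rm_A m a b : act (act m a) b = act m (a * b).
Proof. by case: H. Qed.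
End RM.

Local Close Scope quotient_scope.
Theorem proposition2p6 (K : fieldType) (Ob : Type) (C : Ob -> Ob -> lmodType K)
  (delta : forall X Y Z : Ob, C X Z -> tensor (C Y Z) (C X Y))
  (eps : forall X : Ob, C X X -> K^o)
  (A : algType K) (psi : forall X Y : Ob, tensor (C X Y) A -> tensor A (C X Y)) :
  is_coalgebra C delta eps ->
  is_entwining C delta eps A psi ->
  (* F_psi is a functor from Com^C to Com^C_A(psi) *)
  (forall M : comodule K Ob C,
     is_comodule delta eps M -> is_entwined delta eps psi (Fobj psi M)) /\
  (forall (M N : comodule K Ob C) (f : forall X, cm_obj M X -> cm_obj N X),
     is_comodule delta eps M -> is_comodule delta eps N -> is_comod_mor M N f ->
     is_entw_mor (Fobj psi M) (Fobj psi N) (Fmor psi f)) /\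
  (* natural bijections  Com^C_A(psi)(M (x) A, N) ~= Com^C(M, G N) *)
  exists (Phi : forall (M : comodule K Ob C) (N : entwined K Ob C A),
            (forall X, em_obj (Fobj psi M) X -> em_obj N X) -> forall X, cm_obj M X -> em_obj N X)
         (Psi : forall (M : comodule K Ob C) (N : entwined K Ob C A),
            (forall X, cm_obj M X -> em_obj N X) -> forall X, em_obj (Fobj psi M) X -> em_obj N X),
  [/\ (forall M N g, is_comodule delta eps M -> is_entwined delta eps psi N ->
         is_entw_mor (Fobj psi M) N g -> is_comod_mor M (Gobj N) (Phi M N g)),
      (forall M N f, is_comodule delta eps M -> is_entwined delta eps psi N ->
         is_comod_mor M (Gobj N) f -> is_entw_mor (Fobj psi M) N (Psi M N f)),
      (forall M N g, is_comodule delta eps M -> is_entwined delta eps psi N ->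
         is_entw_mor (Fobj psi M) N g -> forall X x, Psi M N (Phi M N g) X x = g X x),
      (forall M N f, is_comodule delta eps M -> is_entwined delta eps psi N ->
         is_comod_mor M (Gobj N) f -> forall X m, Phi M N (Psi M N f) X m = f X m) &
      (forall (M' M : comodule K Ob C) (N N' : entwined K Ob C A)
              (h : forall X, cm_obj M' X -> cm_obj M X)
              (k : forall X, em_obj N X -> em_obj N' X)
              (g : forall X, em_obj (Fobj psi M) X -> em_obj N X),
         is_comodule delta eps M' -> is_comodule delta eps M ->
         is_entwined delta eps psi N -> is_entwined delta eps psi N' ->
         is_comod_mor M' M h -> is_entw_mor N N' k -> is_entw_mor (Fobj psi M) N g ->
         forall X (m : cm_obj M' X),
           Phi M' N' (fun Y x => k Y (g Y (Fmor psi h Y x))) X m = k X (Phi M N g X (h X m)))].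
Proof.
move=> [HdL HeL Hcoass HlU HrU] [HpsiL Hi Hii Hiii Hiv].
split.
  move=> M [HrhoL HrhoA HrhoU].
  split.
  - split.
    + move=> X Y /=; lin.
    + move=> X Z Y x /=.
      gen x; move=> m a; cbv beta; psimp.
      have R : forall t : tensor (cm_obj M Y) (C X Y),
          tmap id (delta X Z Y) (tassoc_inv (tmap id (psi X Y) (tassoc (tpure t a))))
          = tassoc_inv (tmap id (fun u : tensor (C Z Y) (C X Z) => tassoc (tmap (psi Z Y) id (tassoc_inv (tmap id (psi X Z) (tassoc (tpure u a)))))) (tmap id (delta X Z Y) t)).
        genf; move=> n c; cbv beta; psimp.
        have := Hi X Z Y (tpure c a); psimp; move=> <-.
        gen (psi X Y (tpure c a)); move=> a' c'; cbv beta; psimp.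
        done.
      have L : forall t : tensor (cm_obj M Z) (C X Z),
        tassoc (tmap (fun x : tensor (cm_obj M Z) A => tassoc_inv (tmap id (psi Z Y)
           (tassoc (tmap (cm_coact M Z Y) id x)))) id
           (tassoc_inv (tmap id (psi X Z) (tassoc (tpure t a)))))
        = tassoc_inv (tmap id (fun u : tensor (C Z Y) (C X Z) => tassoc (tmap (psi Z Y) id (tassoc_inv (tmap id (psi X Z) (tassoc (tpure u a)))))) (tassoc (tmap (cm_coact M Z Y) id t))).
        genf; move=> n c2; cbv beta; psimp.
        have E : forall s : tensor A (C X Z),
          tassoc (tmap (fun x : tensor (cm_obj M Z) A => tassoc_inv (tmap id (psi Z Y)
            (tassoc (tmap (cm_coact M Z Y) id x)))) id (tassoc_inv (tpure n s)))
          = tassoc (tmap (fun y : A => tassoc_inv (tmap id (psi Z Y)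
            (tassoc (tpure (cm_coact M Z Y n) y)))) id s).
          genf; move=> a' c'; cbv beta; psimp; done.
        rewrite E.
        gen (cm_coact M Z Y n); move=> n1 c1; cbv beta; psimp.
        gen (psi X Z (tpure c2 a)); move=> a' c'; cbv beta; psimp.
        gen (psi Z Y (tpure c1 a')); move=> a'' c''; cbv beta; psimp; done.
      by rewrite L R HrhoA.
    + move=> X x /=.
      gen x; move=> m a; cbv beta; psimp.
      transitivity (tpure (trunit (tmap id (eps X) (cm_coact M X X m))) a); last by rewrite HrhoU.
      gen (cm_coact M X X m); move=> n c; cbv beta; psimp.
      transitivity (tpure n (trunit (tmap id (eps X) (psi X X (tpure c a))))); last by rewrite Hiv tpureZl tpureZr.
      gen (psi X X (tpure c a)); move=> a' c'; cbv beta; psimp.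
      by rewrite tpureZr.
  - move=> X; split.
    + by move=> b /=; lin.
    + by move=> x /=; lin.
    + move=> x /=; gen x; move=> m a; cbv beta; psimp.
      by rewrite mulr1.
    + move=> x a b /=; gen x; move=> m a'; cbv beta; psimp.
      by rewrite mulrA.
  - move=> X Y x b /=.
    gen x; move=> m a; cbv beta; psimp.
    gen (cm_coact M X Y m); move=> n c; cbv beta; psimp.
    have E := Hii X Y (tpure c (tpure a b)); move: E; psimp => ->.
    gen (psi X Y (tpure c a)); move=> a' c'; cbv beta; psimp.
    gen (psi X Y (tpure c' b)); move=> a'' c''; cbv beta; psimp.
    done.
split.
  move=> M N f [HML HMA HMU] [HNL HNA HNU] [HfL Hf].
  split; [split|].
  - by move=> X; rewrite /Fmor; lin.
  - move=> X Y x /=; rewrite /Fmor.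
    gen x; move=> m a; cbv beta; psimp.
    rewrite Hf.
    gen (cm_coact M X Y m); move=> n c; cbv beta; psimp.
    gen (psi X Y (tpure c a)); move=> a' c'; cbv beta; psimp.
    done.
  - move=> X x b /=; rewrite /Fmor.
    gen x; move=> m a; cbv beta; psimp.
    done.
exists (fun M N g X m => g X (tpure m 1)).
exists (fun M N f X x => tlift (fun m a => em_act N X (f X m) a) x).
split.
- move=> M N g [HML HMA HMU] [[HNL HNA HNU] HNmod HNc] [[HgL Hg] Hga].
  have HactL := fun X => rm_linl (HNmod X).
  have HactR := fun X => rm_linr (HNmod X).
  have HactB := fun X => rm_bil (HNmod X).
  split.
  + by move=> X /=; lin.
  + move=> X Y m /=.
    have := Hg X Y (tpure m 1); rewrite /= => ->; psimp.
    gen (cm_coact M X Y m); move=> n c; cbv beta; psimp.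
    by rewrite Hiii; psimp.
- move=> M N f [HML HMA HMU] [[HNL HNA HNU] HNmod HNc] [HfL Hf].
  have HactL := fun X => rm_linl (HNmod X).
  have HactR := fun X => rm_linr (HNmod X).
  have HactB := fun X => rm_bil (HNmod X).
  have HactA := fun X => rm_A (HNmod X).
  split; [split|].
  + by move=> X /=; lin.
  + move=> X Y x /=.
    gen x; move=> m a; cbv beta; psimp.
    rewrite HNc; psimp.
    rewrite (Hf X Y m : em_coact N X Y (f X m) = _).
    gen (cm_coact M X Y m); move=> n c; cbv beta; psimp.
    gen (psi X Y (tpure c a)); move=> a' c'; cbv beta; psimp.
    done.
  + move=> X x b /=.
    gen x; move=> m a; cbv beta; psimp.
    by rewrite HactA.
- move=> M N g [HML HMA HMU] [[HNL HNA HNU] HNmod HNc] [[HgL Hg] Hga] X x /=.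
  have HactL := fun X => rm_linl (HNmod X).
  have HactR := fun X => rm_linr (HNmod X).
  have HactB := fun X => rm_bil (HNmod X).
  gen x; move=> m a; cbv beta; psimp.
  rewrite -Hga /=; psimp.
  by rewrite mul1r.
- move=> M N f [HML HMA HMU] [[HNL HNA HNU] HNmod HNc] [HfL Hf] X m /=.
  have HactL := fun X => rm_linl (HNmod X).
  have HactR := fun X => rm_linr (HNmod X).
  have HactB := fun X => rm_bil (HNmod X).
  psimp.
  by rewrite (rm_1 (HNmod X)).
- move=> M' M N N' h k g HM' HM HN HN' [HhL Hh] Hk Hg X m /=.
  by rewrite /Fmor tmap_pure //; lin.
Qed.
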